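(* Consider the system $\dot v_1=-v_1^2+v_2$, $\dot v_2=-v_1v_2$ with initial data $(v_1(0),v_2(0))\in\mathbb{R}^2$. Its solution blows up in finite positive time if and only if one of the following holds: $v_2(0)<0$; or $v_2(0)=0$ and $v_1(0)<0$; or $v_2(0)>0$, $v_1(0)<0$ and $v_1(0)^2\ge 2v_2(0)$.
   Context: This is the extended system $\dot{\mathbf v}=-v_1\mathbf v+Q\mathbf v$ with $Q=\begin{pmatrix}0&1\\0&0\end{pmatrix}$, governing $(v_1,v_2)=(V_x,E_x)$ along characteristics for the pressureless Euler–Poisson system $V_t+VV_x=kE-\gamma V$, $E_t+VE_x=NV$ with $k=1$, $N=0$, $\gamma=0$. (The paper's text writes ''$v_2(0)=0$, $v_1(0)>0$'' in the second case, which is a misprint for $v_1(0)<0$.) *)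

(* Defs.v *)
From Stdlib Require Import Reals.
From Coquelicot Require Import Coquelicot.
Open Scope R_scope.

Definition is_solution_on (a b T : R) (v1 v2 : R -> R) : Prop :=
  v1 0 = a /\ v2 0 = b /\
  forall t : R, 0 <= t < T ->
    is_derive v1 t (- (v1 t) ^ 2 + v2 t) /\
    is_derive v2 t (- (v1 t * v2 t)).

Definition blows_up_in_finite_time (a b : R) : Prop :=
  exists T : R, 0 < T /\
  exists v1 v2 : R -> R, is_solution_on a b T v1 v2 /\
    ~ (exists M : R, forall t : R, 0 <= t < T -> Rabs (v1 t) + Rabs (v2 t) <= M).

(* Main.v *)
Require Import Defs.
From Stdlib Require Import Reals Lra Psatz Classical.
From Coquelicot Require Import Coquelicot.
Open Scope R_scope.

Definition DD (v1 v2 : R -> R) t := 1 - v1 t * t + v2 t * t^2/2.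

Lemma D_der v1 v2 t d1 d2 : is_derive v1 t d1 -> is_derive v2 t d2 ->
  is_derive (DD v1 v2) t (- (d1 * t + v1 t) + (d2 * t^2/2 + v2 t * t)).
Proof.
intros H1 H2. unfold DD. auto_derive.
- split; [exists d1; exact H1|split;[exists d2; exact H2|exact I]].
- replace (Derive (fun x => v1 x) t) with d1 by (symmetry; apply is_derive_unique; exact H1).
  replace (Derive (fun x => v2 x) t) with d2 by (symmetry; apply is_derive_unique; exact H2).
  field.
Qed.

Lemma der_cont f x l : is_derive f x l -> continuity_pt f x.
Proof. intros H. apply derivable_continuous_pt. exists l. apply is_derive_Reals. exact H. Qed.

Lemma cont_eps f x eps : continuity_pt f x -> 0 < eps ->
  exists d, 0 < d /\ forall y, Rabs (y - x) < d -> Rabs (f y - f x) < eps.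
Proof.
intros H He. destruct (H eps He) as [d [Hd Hy]]. exists d. split; [lra|].
intros y Hyd. destruct (Req_dec y x) as [->|Hne].
- unfold Rminus. rewrite Rplus_opp_r, Rabs_R0. lra.
- apply (Hy y). split. split. exact I. auto. exact Hyd.
Qed.

Lemma const_on f s : (forall t, 0 <= t < s -> is_derive f t 0) ->
  forall t, 0 <= t < s -> f t = f 0.
Proof.
intros H t Ht. destruct (Req_dec t 0) as [->|Hne]; [reflexivity|].
destruct (MVT_cor2 f (fun _ => 0) 0 t) as [c [Hc _]]; [lra| |lra].
intros c Hc. apply is_derive_Reals. apply H. lra.
Qed.

Lemma first_zero f t1 : 0 <= t1 -> f 0 > 0 -> f t1 <= 0 ->
  (forall t, 0 <= t <= t1 -> continuity_pt f t) ->
  exists s, 0 < s <= t1 /\ f s = 0 /\ forall t, 0 <= t < s -> f t > 0.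
Proof.
intros Ht1 H0 H1 Hc.
set (E := fun x => 0 <= x <= t1 /\ forall t, 0 <= t <= x -> f t > 0).
assert (HB : bound E) by (exists t1; intros x [Hx _]; lra).
assert (HE : exists x, E x) by (exists 0; split; [lra| intros t Ht; replace t with 0 by lra; exact H0]).
destruct (completeness E HB HE) as [s [Hub Hlub]].
assert (Hs0 : 0 <= s) by (apply Hub; destruct HE; split; [lra| intros t Ht; replace t with 0 by lra; exact H0]).
assert (Hs1 : s <= t1) by (apply Hlub; intros x [Hx _]; lra).
assert (Hlt : forall t, 0 <= t < s -> f t > 0).
{ intros t Ht. destruct (Rlt_dec 0 (f t)) as [h|h]; [lra|].
  exfalso. assert (s <= t); [|lra]. apply Hlub. intros x [Hx Hx2].
  destruct (Rle_dec x t) as [h2|h2]; [exact h2|]. exfalso. apply h. apply Hx2. lra. }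
assert (Hfs : f s = 0).
{ destruct (Rtotal_order (f s) 0) as [Hn|[Hz|Hp]]; [exfalso| exact Hz| exfalso].
  - destruct (cont_eps f s (- f s) (Hc s (conj Hs0 Hs1))) as [d [Hd Hy]]; [lra|].
    destruct (Req_dec s 0) as [Hs|Hs]; [subst s; lra|].
    set (y := Rmax 0 (s - d/2)).
    assert (Hy1 : 0 <= y < s) by (unfold y; apply Rmax_case_strong; intros; lra).
    assert (Hy2 : Rabs (y - s) < d) by (unfold y; apply Rmax_case_strong; intros; apply Rabs_def1; lra).
    specialize (Hy y Hy2). specialize (Hlt y Hy1). apply Rabs_def2 in Hy. lra.
  - destruct (cont_eps f s (f s) (Hc s (conj Hs0 Hs1))) as [d [Hd Hy]]; [lra|].
    destruct (Req_dec s t1) as [Hs|Hs]; [subst s; lra|].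
    set (y := Rmin t1 (s + d/2)).
    assert (Hy1 : s < y <= t1) by (unfold y; apply Rmin_case_strong; intros; lra).
    assert (E y).
    { split; [lra|]. intros t Ht. destruct (Rlt_dec t s) as [h|h]; [apply Hlt; lra|].
      assert (Hyd : Rabs (t - s) < d).
      { apply Rabs_def1; unfold y in Ht; revert Ht; apply Rmin_case_strong; intros; lra. }
      specialize (Hy t Hyd). apply Rabs_def2 in Hy. lra. }
    specialize (Hub y H). lra. }
exists s. split; [|split; [exact Hfs| exact Hlt]].
split; [|exact Hs1]. destruct Hs0 as [h|h]; [exact h| subst s; lra].
Qed.

Lemma near_left f s eps : continuity_pt f s -> 0 < s -> 0 < eps ->
  exists t, 0 <= t < s /\ Rabs (f t - f s) < eps.
Proof.
intros Hc Hs He. destruct (cont_eps f s eps Hc He) as [d [Hd Hy]].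
exists (Rmax 0 (s - d/2)). split.
- apply Rmax_case_strong; intros; lra.
- apply Hy. apply Rmax_case_strong; intros; apply Rabs_def1; lra.
Qed.

Definition qq a b t := 1 + a * t + b * t^2/2.

Lemma structure a b T v1 v2 : is_solution_on a b T v1 v2 ->
  forall t, 0 <= t < T -> DD v1 v2 t > 0 /\ v2 t = b * DD v1 v2 t /\
     v1 t - v2 t * t = a * DD v1 v2 t /\ DD v1 v2 t * qq a b t = 1.
Proof.
intros [H01 [H02 Hd]].
assert (HDd : forall t, 0 <= t < T -> is_derive (DD v1 v2) t (- v1 t * DD v1 v2 t)).
{ intros t Ht. destruct (Hd t Ht) as [h1 h2].
  eapply is_derive_ext; [intros; reflexivity|].
  replace (- v1 t * DD v1 v2 t) with (- ((- (v1 t) ^ 2 + v2 t) * t + v1 t) + (- (v1 t * v2 t) * t^2/2 + v2 t * t)).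
  apply D_der; assumption. unfold DD; field. }
assert (HN : forall t, 0 <= t < T -> is_derive (fun t => v1 t - v2 t * t) t (- v1 t * (v1 t - v2 t * t))).
{ intros t Ht. destruct (Hd t Ht) as [h1 h2].
  auto_derive.
  - split; [eexists; exact h1|split;[eexists; exact h2|exact I]].
  - replace (Derive (fun x => v1 x) t) with (- (v1 t) ^ 2 + v2 t) by (symmetry; apply is_derive_unique; exact h1).
    replace (Derive (fun x => v2 x) t) with (- (v1 t * v2 t)) by (symmetry; apply is_derive_unique; exact h2).
    ring. }
assert (D0 : DD v1 v2 0 = 1) by (unfold DD; simpl; field).
assert (Rel : forall s, s <= T -> (forall t, 0 <= t < s -> DD v1 v2 t > 0) ->
   forall t, 0 <= t < s -> v2 t = b * DD v1 v2 t /\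
     v1 t - v2 t * t = a * DD v1 v2 t /\ DD v1 v2 t * qq a b t = 1).
{ intros s HsT Hpos t Ht.
  assert (R1 : v2 t / DD v1 v2 t = v2 0 / DD v1 v2 0).
  { apply (const_on (fun t => v2 t / DD v1 v2 t) s); [|exact Ht].
    intros u Hu. assert (Hu' : 0 <= u < T) by lra. specialize (Hpos u Hu).
    destruct (Hd u Hu') as [h1 h2].
    eapply is_derive_ext; [intros; reflexivity|].
    replace 0 with ((- (v1 u * v2 u) * DD v1 v2 u - v2 u * (- v1 u * DD v1 v2 u)) / DD v1 v2 u ^ 2)
      by (field; lra).
    apply is_derive_div; [exact h2| apply HDd; exact Hu'| lra]. }
  assert (R2 : (v1 t - v2 t * t) / DD v1 v2 t = (v1 0 - v2 0 * 0) / DD v1 v2 0).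
  { apply (const_on (fun t => (v1 t - v2 t * t) / DD v1 v2 t) s); [|exact Ht].
    intros u Hu. assert (Hu' : 0 <= u < T) by lra. specialize (Hpos u Hu).
    eapply is_derive_ext; [intros; reflexivity|].
    replace 0 with (((- v1 u * (v1 u - v2 u * u)) * DD v1 v2 u - (v1 u - v2 u * u) * (- v1 u * DD v1 v2 u)) / DD v1 v2 u ^ 2)
      by (field; lra).
    apply (is_derive_div (fun t => v1 t - v2 t * t)); [apply HN; exact Hu'| apply HDd; exact Hu'| lra]. }
  rewrite D0, H01, H02 in *. specialize (Hpos t Ht).
  assert (E1 : v2 t = b * DD v1 v2 t) by (apply (Rmult_eq_reg_r (/ DD v1 v2 t)); [| apply Rinv_neq_0_compat; lra]; rewrite Rmult_assoc, Rinv_r by lra; unfold Rdiv in R1; lra).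
  assert (E2 : v1 t - v2 t * t = a * DD v1 v2 t) by (apply (Rmult_eq_reg_r (/ DD v1 v2 t)); [| apply Rinv_neq_0_compat; lra]; rewrite Rmult_assoc, Rinv_r by lra; unfold Rdiv in R2; lra).
  split; [exact E1|split;[exact E2|]].
  assert (E3 : v1 t = DD v1 v2 t * (a + b * t)) by nra.
  unfold qq. pose proof (eq_refl (DD v1 v2 t)) as E4. unfold DD at 2 in E4.
  rewrite E3, E1 in E4. unfold qq. nra. }
assert (Hpos : forall t, 0 <= t < T -> DD v1 v2 t > 0).
{ intros t1 Ht1. apply NNPP. intro Hn.
  destruct (first_zero (DD v1 v2) t1) as [s [Hs [Hs0 Hslt]]]; [lra|lra|lra| |].
  - intros t Ht. apply (der_cont _ _ _ (HDd t ltac:(lra))).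
  - assert (Hc : continuity_pt (fun t => DD v1 v2 t * qq a b t) s).
    { apply continuity_pt_mult. apply (der_cont _ _ _ (HDd s ltac:(lra))).
      unfold qq. reg. }
    destruct (near_left _ s (1/2) Hc) as [t [Ht Habs]]; [lra|lra|].
    rewrite Hs0 in Habs. destruct (Rel s ltac:(lra) Hslt t Ht) as [_ [_ E]].
    rewrite E in Habs. apply Rabs_def2 in Habs. lra. }
intros t Ht. split; [apply Hpos; exact Ht|]. apply (Rel T (Rle_refl T) Hpos t Ht).
Qed.

Lemma q_pos_bound a b : ~ (b < 0 \/ (b = 0 /\ a < 0) \/ (0 < b /\ a < 0 /\ 2 * b <= a ^ 2)) ->
  exists m, 0 < m /\ forall t, 0 <= t -> m <= qq a b t.
Proof.
intros Hn. unfold qq.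
destruct (Rle_dec 0 a) as [Ha|Ha].
- exists 1. split; [lra|]. intros t Ht. assert (0 <= b) by (destruct (Rlt_dec b 0); [tauto|lra]). nra.
- assert (0 < b /\ a ^ 2 < 2 * b) as [Hb Hab].
  { destruct (Rtotal_order b 0) as [h|[h|h]]; [exfalso; apply Hn; left; exact h|exfalso; apply Hn; right; left; split; lra|].
    split; [exact h|]. destruct (Rlt_dec (a^2) (2*b)); [assumption|]. exfalso; apply Hn; right; right; split; [|split]; lra. }
  exists ((2*b - a^2)/(2*b)). split. apply Rdiv_lt_0_compat; lra.
  intros t Ht. apply (Rmult_le_reg_r (2*b)); [lra|].
  replace ((2 * b - a ^ 2) / (2 * b) * (2 * b)) with (2 * b - a ^ 2) by (field; lra). pose proof (pow2_ge_0 (b*t+a)). nra.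
Qed.

Lemma forward a b : blows_up_in_finite_time a b ->
  (b < 0 \/ (b = 0 /\ a < 0) \/ (0 < b /\ a < 0 /\ 2 * b <= a ^ 2)).
Proof.
intros [T [HT [v1 [v2 [Hs Hub]]]]].
apply NNPP. intro Hn. destruct (q_pos_bound a b Hn) as [m [Hm Hq]].
apply Hub. exists ((Rabs a + Rabs b * T + Rabs b) / m).
intros t Ht. destruct (structure a b T v1 v2 Hs t Ht) as [HD [E1 [E2 E3]]].
set (D := DD v1 v2 t) in *.
assert (Hv1 : v1 t = D * (a + b * t)) by nra.
rewrite Hv1, E1, !Rabs_mult, (Rabs_right D) by lra.
assert (HDm : D <= / m).
{ apply (Rmult_le_reg_r m); [lra|]. rewrite Rinv_l by lra. specialize (Hq t (proj1 Ht)). nra. }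
assert (Hab : Rabs (a + b * t) <= Rabs a + Rabs b * T).
{ eapply Rle_trans; [apply Rabs_triang|]. rewrite Rabs_mult, (Rabs_right t) by lra.
  pose proof (Rabs_pos b). nra. }
pose proof (Rabs_pos b). pose proof (Rabs_pos (a + b*t)). unfold Rdiv.
apply Rle_trans with (D * (Rabs a + Rabs b * T + Rabs b)); [nra|].
pose proof (Rabs_pos a). assert (0 <= Rabs a + Rabs b * T + Rabs b) by nra. nra.
Qed.

Lemma backward a b :
  (b < 0 \/ (b = 0 /\ a < 0) \/ (0 < b /\ a < 0 /\ 2 * b <= a ^ 2)) ->
  blows_up_in_finite_time a b.
Proof.
intros Hc.
assert (Ht1 : exists t1, 0 <= t1 /\ qq a b t1 <= 0).
{ unfold qq. destruct Hc as [Hb|[[Hb Ha]|[Hb [Ha Hab]]]].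
  - exists (1 + 2 * (Rabs a + 1) / (- b)). pose proof (Rabs_pos a).
    assert (0 <= 2 * (Rabs a + 1) / (- b)) by (apply Rle_mult_inv_pos; lra).
    split; [lra|]. set (t := 1 + 2 * (Rabs a + 1) / (- b)) in *.
    assert (Hbt : b * t / 2 <= - (Rabs a + 1)).
    { unfold t. replace (b * (1 + 2 * (Rabs a + 1) / - b) / 2) with (b/2 - (Rabs a + 1)) by (field; lra). lra. }
    assert (a * t <= Rabs a * t) by (apply Rmult_le_compat_r; [unfold t; lra| apply Rle_abs]).
    replace (b * t ^ 2 / 2) with ((b * t / 2) * t) by field. assert (1 <= t) by (unfold t; lra). nra.
  - exists (- 1 / a). split. replace (-1/a) with (/ (-a)) by (field; lra).
    apply Rlt_le, Rinv_0_lt_compat; lra.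
    subst b. replace (1 + a * (-1 / a) + 0 * (-1 / a) ^ 2 / 2) with 0 by (field; lra). lra.
  - exists (- a / b). split. apply Rle_mult_inv_pos; lra.
    replace (1 + a * (- a / b) + b * (- a / b) ^ 2 / 2) with (1 - a^2 / (2 * b)) by (field; lra).
    assert (1 <= a ^ 2 / (2 * b)) by (apply (Rmult_le_reg_r (2*b)); [lra|]; replace (a ^ 2 / (2 * b) * (2 * b)) with (a^2) by (field; lra); lra).
    lra. }
destruct Ht1 as [t1 [Ht1 Hq1]].
destruct (first_zero (qq a b) t1) as [T [HT [HqT Hpos]]]; [lra|unfold qq; lra|lra| intros; unfold qq; reg |].
exists T. split; [lra|].
exists (fun t => (a + b * t) / qq a b t), (fun t => b / qq a b t). split.
- split; [unfold qq; simpl; field|split; [unfold qq; simpl; field|]].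
  intros t Ht. specialize (Hpos t Ht). unfold qq in *. split.
  + auto_derive; [lra|]. field. lra.
  + auto_derive; [lra|]. field. lra.
- intros [M HM].
  assert (HM0 : 0 <= M) by (specialize (HM 0 (conj (Rle_refl 0) (proj1 HT))); pose proof (Rabs_pos ((a + b * 0) / qq a b 0)); pose proof (Rabs_pos (b / qq a b 0)); lra).
  assert (Hc2 : exists c, 0 < c /\ forall t, c <= Rabs (a + b * t) + Rabs b).
  { destruct (Req_dec b 0) as [Hb|Hb].
    - exists (Rabs a). subst b. split. destruct Hc as [h|[[_ h]|h]]; [lra| apply Rabs_pos_lt; lra| lra].
      intros t. rewrite Rmult_0_l, Rplus_0_r, Rabs_R0. lra.
    - exists (Rabs b). split; [apply Rabs_pos_lt; exact Hb|]. intros; pose proof (Rabs_pos (a + b*t)); lra. }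
  destruct Hc2 as [c [Hc0 Hct]].
  destruct (near_left (qq a b) T (c / (M + 1))) as [t [Ht Habs]]; [unfold qq; reg| lra| apply Rdiv_lt_0_compat; lra|].
  rewrite HqT, Rminus_0_r in Habs. specialize (Hpos t Ht). rewrite Rabs_right in Habs by lra.
  specialize (HM t Ht). specialize (Hct t).
  unfold Rdiv in HM. rewrite !Rabs_mult, (Rabs_right (/ qq a b t)) in HM by (apply Rle_ge, Rlt_le, Rinv_0_lt_compat; lra).
  assert (c <= M * qq a b t).
  { apply Rle_trans with ((Rabs (a + b*t) + Rabs b)); [exact Hct|].
    apply (Rmult_le_reg_r (/ qq a b t)); [apply Rinv_0_lt_compat; lra|].
    rewrite Rmult_assoc, Rinv_r by lra. lra. }
  assert (M * qq a b t < c).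
  { apply Rle_lt_trans with ((M+1) * qq a b t); [nra|].
    apply (Rmult_lt_reg_r (/ (M+1))); [apply Rinv_0_lt_compat; lra|].
    replace ((M + 1) * qq a b t * / (M + 1)) with (qq a b t) by (field; lra). exact Habs. }
  lra.
Qed.

Theorem mainTheorem12 (a b : R) :
  blows_up_in_finite_time a b <->
  (b < 0 \/ (b = 0 /\ a < 0) \/ (0 < b /\ a < 0 /\ 2 * b <= a ^ 2)).
Proof. split; [apply forward | apply backward]. Qed.
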